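(* Let $p_1,p_2\in(0,1)$ and $U_1^+,U_1^-,U_2^+,U_2^->0$. Consider the linear program (AUX) in the variables $c=(c_1^+,c_1^-,c_2^+,c_2^-)\in\mathbb{R}^4$: maximize $W'(c)=p_1U_1^+c_1^+-(1-p_1)U_1^-c_1^-+p_2U_2^+c_2^+-(1-p_2)U_2^-c_2^-$ subject to $p_1c_2^+-(1-p_1)c_2^-\le p_1^2$; $p_2c_1^+-(1-p_2)c_1^-\le p_2^2$; $p_1c_1^++(1-p_1)c_1^-=p_2c_2^++(1-p_2)c_2^-$; and $0\le c_1^+,c_1^-,c_2^+,c_2^-\le 1$. Then at least one of $c^{(1)}=(c_1^+=1,\ c_1^-=p_2,\ c_2^+=1,\ c_2^-=p_1)$ and $c^{(2)}=(c_1^+=p_2,\ c_1^-=0,\ c_2^+=p_1,\ c_2^-=0)$ is an optimal solution of (AUX). *)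

(* Defs.v *)
From Stdlib Require Import Reals.
Open Scope R_scope.

Record cvec : Type := mkC { c1p : R; c1m : R; c2p : R; c2m : R }.

Definition W' (p1 p2 U1p U1m U2p U2m : R) (c : cvec) : R :=
  p1 * U1p * c1p c - (1 - p1) * U1m * c1m c
  + p2 * U2p * c2p c - (1 - p2) * U2m * c2m c.

Definition in01 (x : R) : Prop := 0 <= x <= 1.

Definition feasible (p1 p2 : R) (c : cvec) : Prop :=
  p1 * c2p c - (1 - p1) * c2m c <= p1 ^ 2 /\
  p2 * c1p c - (1 - p2) * c1m c <= p2 ^ 2 /\
  p1 * c1p c + (1 - p1) * c1m c = p2 * c2p c + (1 - p2) * c2m c /\
  in01 (c1p c) /\ in01 (c1m c) /\ in01 (c2p c) /\ in01 (c2m c).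

Definition optimal (p1 p2 U1p U1m U2p U2m : R) (c : cvec) : Prop :=
  feasible p1 p2 c /\
  forall d : cvec, feasible p1 p2 d ->
    W' p1 p2 U1p U1m U2p U2m d <= W' p1 p2 U1p U1m U2p U2m c.

(* Main.v *)
Require Import Defs.
From Stdlib Require Import Reals Lra Psatz.
Open Scope R_scope.

Lemma part_bounds (p1 p2 a b x y : R) :
  0 < p1 < 1 -> 0 < p2 < 1 -> 0 < a -> 0 < b ->
  p2 * x - (1 - p2) * y <= p2 ^ 2 -> 0 <= y -> x <= 1 ->
  let s := p1 * x + (1 - p1) * y in
  let T := p1 * (1 - p2) + p2 * (1 - p1) in
  let S := p1 + p2 - p1 * p2 in
  p1 * (a * x - b * y) <= a * s /\
  T * (a * x - b * y) <= T * a * p2 + (a * (1 - p2) - b * p2) * (s - p1 * p2) /\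
  (1 - p1) * (a * x - b * y) <= (1 - p1) * (a - b * p2) - b * (s - S).
Proof.
  intros H1 H2 Ha Hb HB Hy Hx s T S; subst s T S.
  split; [|split].
  - assert (0 <= (a * (1 - p1) + p1 * b) * y) by (apply Rmult_le_pos; nra). nra.
  - assert (Hk : 0 <= (a * (1 - p1) + b * p1) * (p2 ^ 2 - (p2 * x - (1 - p2) * y))).
    { apply Rmult_le_pos; nra. }
    nra.
  - assert (Hk : 0 <= (1 - x) * (a * (1 - p1) + b * p1)).
    { apply Rmult_le_pos; nra. }
    nra.
Qed.

Theorem lemma3 (p1 p2 U1p U1m U2p U2m : R)
  (hp1 : 0 < p1 < 1) (hp2 : 0 < p2 < 1)
  (hU1p : 0 < U1p) (hU1m : 0 < U1m) (hU2p : 0 < U2p) (hU2m : 0 < U2m) :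
  optimal p1 p2 U1p U1m U2p U2m (mkC 1 p2 1 p1) \/
  optimal p1 p2 U1p U1m U2p U2m (mkC p2 0 p1 0).
Proof.
  set (a := p1 * U1p). set (b := (1 - p1) * U1m).
  set (c := p2 * U2p). set (d := (1 - p2) * U2m).
  assert (Ha : 0 < a) by (unfold a; nra).
  assert (Hb : 0 < b) by (unfold b; nra).
  assert (Hc : 0 < c) by (unfold c; nra).
  assert (Hd : 0 < d) by (unfold d; nra).
  assert (HW : forall e, W' p1 p2 U1p U1m U2p U2m e =
     (a * c1p e - b * c1m e) + (c * c2p e - d * c2m e)).
  { intros e; unfold W', a, b, c, d; ring. }
  set (m := a * (1 - p2) - b * p2 + c * (1 - p1) - d * p1).
  set (T := p1 * (1 - p2) + p2 * (1 - p1)).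
  set (S := p1 + p2 - p1 * p2).
  assert (HT : 0 < T) by (unfold T; nra).
  destruct (Rle_lt_dec 0 m) as [Hm | Hm]; [left | right]; split.
  - unfold feasible, in01; simpl; repeat split; try lra; nra.
  - intros [x y z w] [HA [HB [HE [[Hx0 Hx1] [[Hy0 Hy1] [[Hz0 Hz1] [Hw0 Hw1]]]]]]].
    simpl in *. rewrite !HW; simpl.
    destruct (part_bounds p1 p2 a b x y hp1 hp2 Ha Hb HB Hy0 Hx1) as [L1 [M1 R1]].
    destruct (part_bounds p2 p1 c d z w hp2 hp1 Hc Hd HA Hw0 Hz1) as [L2 [M2 R2]].
    simpl in *.
    set (s := p1 * x + (1 - p1) * y) in *.
    assert (Hs2 : p2 * z + (1 - p2) * w = s) by lra.
    rewrite Hs2 in L2, M2, R2.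
    fold T S in M1, R1.
    replace (p2 * (1 - p1) + p1 * (1 - p2)) with T in M2 by (unfold T; ring).
    replace (p2 + p1 - p2 * p1) with S in R2 by (unfold S; ring).
    destruct (Rle_lt_dec s S) as [HsS | HsS].
    + assert (HP : 0 <= m * (S - s)) by (apply Rmult_le_pos; lra).
      assert (HS : S - p1 * p2 = T) by (unfold S, T; ring).
      apply (Rmult_le_reg_l T); [lra|].
      unfold m in HP; nra.
    + assert (H12 : 0 < (1 - p1) * (1 - p2)) by nra.
      apply (Rmult_le_reg_l ((1 - p1) * (1 - p2))); [lra|].
      assert (X1 : 0 <= (1 - p2) * (b * (s - S))) by (apply Rmult_le_pos; nra).
      assert (X2 : 0 <= (1 - p1) * (d * (s - S))) by (apply Rmult_le_pos; nra).
      nra.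
  - unfold feasible, in01; simpl; repeat split; try lra; nra.
  - intros [x y z w] [HA [HB [HE [[Hx0 Hx1] [[Hy0 Hy1] [[Hz0 Hz1] [Hw0 Hw1]]]]]]].
    simpl in *. rewrite !HW; simpl.
    destruct (part_bounds p1 p2 a b x y hp1 hp2 Ha Hb HB Hy0 Hx1) as [L1 [M1 R1]].
    destruct (part_bounds p2 p1 c d z w hp2 hp1 Hc Hd HA Hw0 Hz1) as [L2 [M2 R2]].
    simpl in *.
    set (s := p1 * x + (1 - p1) * y) in *.
    assert (Hs2 : p2 * z + (1 - p2) * w = s) by lra.
    rewrite Hs2 in L2, M2, R2.
    fold T S in M1, R1.
    replace (p2 * (1 - p1) + p1 * (1 - p2)) with T in M2 by (unfold T; ring).
    destruct (Rle_lt_dec (p1 * p2) s) as [Hs | Hs].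
    + assert (HP : 0 <= (- m) * (s - p1 * p2)) by (apply Rmult_le_pos; lra).
      apply (Rmult_le_reg_l T); [lra|].
      unfold m in HP; nra.
    + assert (H12 : 0 < p1 * p2) by nra.
      apply (Rmult_le_reg_l (p1 * p2)); [lra|].
      assert (X1 : 0 <= p2 * (a * (p1 * p2 - s))) by (apply Rmult_le_pos; nra).
      assert (X2 : 0 <= p1 * (c * (p1 * p2 - s))) by (apply Rmult_le_pos; nra).
      nra.
Qed.
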